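(* Let $A$ be a non-empty set and let $f\in H_0[\ell_1(A)]_+$ be maximal. Then there exists $\phi\in\ell_\infty(A)^*$ such that $f=g_\phi$, where $g_\phi(x^* )=|\phi(|x^*|)|$ for $x^*\in\ell_\infty(A)$.
   Context: Identify $\ell_1(A)^*$ with $\ell_\infty(A)$. $H[\ell_1(A)]$ is the vector space of positively homogeneous functions $f:\ell_\infty(A)\to\mathbb R$ ($f(\lambda x^* )=\lambda f(x^* )$ for $\lambda>0$), ordered pointwise. For $f\in H[\ell_1(A)]$, $\|f\|_{FBL[\ell_1(A)]}:=\sup\{\sum_{k=1}^n|f(x_k^* )| : n\in\mathbb N,\ x_1^*,\dots,x_n^*\in\ell_\infty(A),\ \sup_{a\in A}\sum_{k=1}^n|x_k^*(a)|\le1\}$, and $H_0[\ell_1(A)]=\{f:\|f\|_{FBL[\ell_1(A)]}<\infty\}$ with positive cone $H_0[\ell_1(A)]_+$. An element $f\in H_0[\ell_1(A)]_+$ is maximal if the only $g\in H_0[\ell_1(A)]_+$ with $g\ge f$ and $\|g\|_{FBL[\ell_1(A)]}=\|f\|_{FBL[\ell_1(A)]}$ is $g=f$. *)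

(* Defs.v *)
From Stdlib Require Import Reals Lra List.
From Coquelicot Require Import Coquelicot.
Open Scope R_scope.
Set Implicit Arguments.

(* l_infty(A) = l_1(A)^* : bounded real functions on A. *)
Record linf (A : Type) := Linf {
  lv :> A -> R ;
  lv_bdd : exists M : R, forall a, Rabs (lv a) <= M }.

Definition lscale (A : Type) (l : R) (x : linf A) : linf A.
Proof.
  refine (@Linf A (fun a => l * x a) _).
  destruct (lv_bdd x) as [M HM]. exists (Rabs l * M). intro a.
  rewrite Rabs_mult. apply Rmult_le_compat_l; [apply Rabs_pos | apply HM].
Defined.

Definition ladd (A : Type) (x y : linf A) : linf A.
Proof.
  refine (@Linf A (fun a => x a + y a) _).
  destruct (lv_bdd x) as [M HM]. destruct (lv_bdd y) as [N HN].
  exists (M + N). intro a.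
  eapply Rle_trans; [apply Rabs_triang | apply Rplus_le_compat; auto].
Defined.

Definition labs (A : Type) (x : linf A) : linf A.
Proof.
  refine (@Linf A (fun a => Rabs (x a)) _).
  destruct (lv_bdd x) as [M HM]. exists M. intro a. rewrite Rabs_Rabsolu. apply HM.
Defined.

Definition pos_homogeneous (A : Type) (f : linf A -> R) : Prop :=
  forall (l : R) (x : linf A), 0 < l -> f (lscale l x) = l * f x.

Definition admissible (A : Type) (xs : list (linf A)) : Prop :=
  forall a : A, fold_right (fun (x : linf A) s => Rabs (x a) + s) 0 xs <= 1.

Definition FBL_sums (A : Type) (f : linf A -> R) : R -> Prop :=
  fun r => exists xs : list (linf A),
    admissible xs /\ r = fold_right (fun (x : linf A) s => Rabs (f x) + s) 0 xs.

Definition FBL_norm (A : Type) (f : linf A -> R) : Rbar := Lub_Rbar (FBL_sums f).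

Definition H0 (A : Type) (f : linf A -> R) : Prop :=
  pos_homogeneous f /\ FBL_norm f <> p_infty.

Definition H0_pos (A : Type) (f : linf A -> R) : Prop :=
  H0 f /\ forall x, 0 <= f x.

Definition maximal (A : Type) (f : linf A -> R) : Prop :=
  H0_pos f /\
  forall g : linf A -> R, H0_pos g -> (forall x, f x <= g x) ->
    FBL_norm g = FBL_norm f -> g = f.

(* l_infty(A)^* : norm-continuous linear functionals on l_infty(A);
   continuity is boundedness: |phi x| <= C * M whenever |x(a)| <= M for all a,
   i.e. |phi x| <= C ||x||_infty. *)
Definition linf_dual (A : Type) (phi : linf A -> R) : Prop :=
  (forall x y, phi (ladd x y) = phi x + phi y) /\
  (forall l x, phi (lscale l x) = l * phi x) /\
  (exists C : R, forall (x : linf A) (M : R),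
     (forall a, Rabs (x a) <= M) -> Rabs (phi x) <= C * M).

Definition g_of (A : Type) (phi : linf A -> R) : linf A -> R :=
  fun x => Rabs (phi (labs x)).

(* Main.v *)
Require Import Defs.
From Stdlib Require Import Reals Lra List Classical FunctionalExtensionality ClassicalEpsilon.
From Coquelicot Require Import Coquelicot.
Open Scope R_scope.
Set Implicit Arguments.

Definition sup (E : R -> Prop) : R := real (Lub_Rbar E).
Definition bnd (E : R -> Prop) := exists M, forall r, E r -> r <= M.

Lemma sup_ub (E : R -> Prop) r : bnd E -> E r -> r <= sup E.
Proof.
  intros [M HM] Er. unfold sup. destruct (Lub_Rbar_correct E) as [Hub Hl].
  destruct (Lub_Rbar E) as [l| |] eqn:Hq.
  - apply (Hub r Er).
  - specialize (Hl (Finite M)). simpl in Hl. exfalso; apply Hl. intros s Es. apply (HM s Es).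
  - specialize (Hub r Er). simpl in Hub. contradiction.
Qed.

Lemma sup_le (E : R -> Prop) r0 M : E r0 -> (forall r, E r -> r <= M) -> sup E <= M.
Proof.
  intros E0 HM. unfold sup. destruct (Lub_Rbar_correct E) as [Hub Hl].
  destruct (Lub_Rbar E) as [l| |] eqn:Hq.
  - apply (Hl (Finite M)). intros s Es. apply (HM s Es).
  - specialize (Hl (Finite M)). simpl in Hl. exfalso; apply Hl. intros s Es. apply (HM s Es).
  - specialize (Hub r0 E0). simpl in Hub. contradiction.
Qed.

Lemma sup_add (E1 E2 E3 : R -> Prop) r1 r2 :
  E1 r1 -> E2 r2 -> bnd E3 ->
  (forall s1 s2, E1 s1 -> E2 s2 -> exists s3, E3 s3 /\ s1 + s2 <= s3) ->
  sup E1 + sup E2 <= sup E3.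
Proof.
  intros H1 H2 B3 H.
  assert (forall s2, E2 s2 -> sup E1 <= sup E3 - s2).
  { intros s2 Hs2. apply (sup_le _ r1); auto. intros s1 Hs1.
    destruct (H s1 s2 Hs1 Hs2) as [s3 [Hs3 Hle]].
    pose proof (sup_ub s3 B3 Hs3). lra. }
  assert (sup E2 <= sup E3 - sup E1).
  { apply (sup_le _ r2); auto. intros s2 Hs2. specialize (H0 s2 Hs2). lra. }
  lra.
Qed.

Lemma sup_scale (E1 E2 : R -> Prop) l r1 :
  0 < l -> E1 r1 -> bnd E2 ->
  (forall s, E1 s -> exists s', E2 s' /\ l * s <= s') ->
  l * sup E1 <= sup E2.
Proof.
  intros Hl H1 B2 H.
  assert (sup E1 <= sup E2 / l).
  { apply (sup_le _ r1); auto. intros s Hs. destruct (H s Hs) as [s' [Hs' Hle]].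
    pose proof (sup_ub s' B2 Hs'). apply Rmult_le_reg_l with l; auto.
    field_simplify; lra. }
  apply Rmult_le_compat_l with (r := l) in H0; [|lra].
  field_simplify in H0; lra.
Qed.

Definition lconst (A : Type) (c : R) : linf A.
Proof. refine (@Linf A (fun _ => c) _). exists (Rabs c). intro; lra. Defined.
Arguments lconst {A} c.

Definition lsum (A : Type) (xs : list (linf A)) (a : A) : R :=
  fold_right (fun (x : linf A) s => Rabs (x a) + s) 0 xs.
Definition fsum (A : Type) (h : linf A -> R) (xs : list (linf A)) : R :=
  fold_right (fun (x : linf A) s => h x + s) 0 xs.

Lemma lsum_app A (xs ys : list (linf A)) a : lsum (xs ++ ys) a = lsum xs a + lsum ys a.
Proof. induction xs; simpl; [lra|]. unfold lsum in *; simpl. rewrite IHxs. lra. Qed.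
Lemma fsum_app A h (xs ys : list (linf A)) : fsum h (xs ++ ys) = fsum h xs + fsum h ys.
Proof. induction xs; simpl; [lra|]. unfold fsum in *; simpl. rewrite IHxs. lra. Qed.
Lemma lsum_scale A (xs : list (linf A)) k a : 0 <= k -> lsum (map (lscale k) xs) a = k * lsum xs a.
Proof. intros Hk. induction xs; unfold lsum in *; simpl; [lra|]. rewrite IHxs, Rabs_mult, (Rabs_pos_eq k); lra. Qed.
Lemma lsum_nn A (xs : list (linf A)) a : 0 <= lsum xs a.
Proof. induction xs; unfold lsum in *; simpl; [lra|]. pose proof (Rabs_pos (a0 a)); lra. Qed.

Definition lsum_l (A : Type) (xs : list (linf A)) : linf A :=
  fold_right (fun x s => ladd (labs x) s) (lconst 0) xs.
Lemma lsum_l_eq A (xs : list (linf A)) a : lsum_l xs a = lsum xs a.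
Proof. induction xs; simpl; auto. unfold lsum in *; simpl. rewrite IHxs. auto. Qed.

Lemma fold_abs_gen A (h : linf A -> R) xs : (forall x, 0 <= h x) ->
  fold_right (fun (x : linf A) s => Rabs (h x) + s) 0 xs = fsum h xs.
Proof. intros H. induction xs; simpl; auto. unfold fsum in *; simpl. rewrite IHxs, Rabs_pos_eq; auto. Qed.
Lemma fsum_mono A (h1 h2 : linf A -> R) xs : (forall x, h1 x <= h2 x) -> fsum h1 xs <= fsum h2 xs.
Proof. intros H. induction xs; unfold fsum in *; simpl; [lra|]. specialize (H a). lra. Qed.

Section Main.
Variable A : Type.
Variable f : linf A -> R.
Variable N : R.
Hypothesis Hhom : pos_homogeneous f.
Hypothesis Hpos : forall x, 0 <= f x.
Hypothesis HN0 : 0 <= N.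
Hypothesis HNub : forall r, FBL_sums f r -> r <= N.

Lemma fsum_scale xs k : 0 < k -> fsum f (map (lscale k) xs) = k * fsum f xs.
Proof. intros Hk. induction xs; unfold fsum in *; simpl; [lra|]. rewrite IHxs, Hhom; lra. Qed.

Lemma fold_abs xs : fold_right (fun (x : linf A) s => Rabs (f x) + s) 0 xs = fsum f xs.
Proof. induction xs; simpl; auto. unfold fsum in *; simpl. rewrite IHxs, Rabs_pos_eq; auto. Qed.

Lemma SB xs K : 0 < K -> (forall a, lsum xs a <= K) -> fsum f xs <= K * N.
Proof.
  intros HK H.
  assert (FBL_sums f (fsum f (map (lscale (/K)) xs))).
  { exists (map (lscale (/K)) xs). split.
    - intro a. change (lsum (map (lscale (/K)) xs) a <= 1).
      rewrite lsum_scale by (left; apply Rinv_0_lt_compat; auto).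
      specialize (H a). apply Rmult_le_reg_l with K; auto. field_simplify; lra.
    - rewrite fold_abs; auto. }
  apply HNub in H0. rewrite fsum_scale in H0 by (apply Rinv_0_lt_compat; auto).
  apply Rmult_le_compat_l with (r := K) in H0; [|lra]. field_simplify in H0; lra.
Qed.

Definition PhiSet (x : linf A) (r : R) : Prop :=
  exists c xs, 0 <= c /\ (forall a, lsum xs a <= x a + c) /\ r = fsum f xs - c * N.
Definition Phi x := sup (PhiSet x).

Lemma Phi_bnd x : bnd (PhiSet x).
Proof.
  destruct (lv_bdd x) as [B HB]. exists ((Rabs B + 1) * N).
  intros r [c [xs [Hc [Hl Hr]]]]. subst r.
  assert (fsum f xs <= (Rabs B + 1 + c) * N).
  { apply SB. pose proof (Rabs_pos B); lra.
    intro a. specialize (Hl a). specialize (HB a). pose proof (Rle_abs B).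
    pose proof (Rle_abs (x a)). lra. }
  nra.
Qed.

Lemma Phi_ne x : PhiSet x (0 - Rabs (proj1_sig (constructive_indefinite_description _ (lv_bdd x))) * N).
Proof.
  destruct (constructive_indefinite_description _ (lv_bdd x)) as [B HB]; simpl.
  exists (Rabs B), nil. split; [apply Rabs_pos|]. split; auto.
  intro a. unfold lsum; simpl. specialize (HB a). pose proof (Rle_abs B).
  pose proof (Rle_abs (- x a)). rewrite Rabs_Ropp in H0. lra.
Qed.

Lemma Phi_ub x r : PhiSet x r -> r <= Phi x.
Proof. intros; apply sup_ub; auto using Phi_bnd. Qed.
Lemma Phi_le x M : (forall r, PhiSet x r -> r <= M) -> Phi x <= M.
Proof. intros; eapply sup_le; [apply Phi_ne|auto]. Qed.

Lemma Phi_mono (u w : linf A) : (forall a, u a <= w a) -> Phi u <= Phi w.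
Proof.
  intros H. apply Phi_le. intros r [c [xs [Hc [Hl Hr]]]]. apply Phi_ub.
  exists c, xs. split; auto. split; auto. intro a. specialize (Hl a); specialize (H a); lra.
Qed.
Lemma Phi_ext (u w : linf A) : (forall a, u a = w a) -> Phi u = Phi w.
Proof. intros H; apply Rle_antisym; apply Phi_mono; intro a; rewrite H; lra. Qed.

Lemma Phi_nn (x : linf A) : (forall a, 0 <= x a) -> 0 <= Phi x.
Proof.
  intros H. apply Phi_ub. exists 0, nil. split; [lra|]. split.
  - intro a; unfold lsum; simpl; specialize (H a); lra.
  - unfold fsum; simpl; ring.
Qed.

Lemma Phi_f x : f x <= Phi (labs x).
Proof.
  apply Phi_ub. exists 0, (x :: nil). split; [lra|]. split.
  - intro a; unfold lsum; simpl; lra.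
  - unfold fsum; simpl; ring.
Qed.

Lemma Phi_shift (x : linf A) c : 0 <= c -> Phi (ladd x (lconst c)) <= Phi x + c * N.
Proof.
  intros Hc. apply Phi_le. intros r [c' [xs [Hc' [Hl Hr]]]].
  assert (PhiSet x (r - c * N)).
  { exists (c + c'), xs. split; [lra|]. split.
    - intro a; specialize (Hl a); simpl in Hl; lra.
    - rewrite Hr; ring. }
  apply Phi_ub in H. lra.
Qed.

Lemma Phi_sadd u w : Phi u + Phi w <= Phi (ladd u w).
Proof.
  eapply sup_add; [apply Phi_ne | apply Phi_ne | apply Phi_bnd | ].
  intros s1 s2 [c1 [xs1 [Hc1 [Hl1 Hr1]]]] [c2 [xs2 [Hc2 [Hl2 Hr2]]]].
  exists (s1 + s2). split; [|lra].
  exists (c1 + c2), (xs1 ++ xs2). split; [lra|]. split.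
  - intro a. rewrite lsum_app. specialize (Hl1 a); specialize (Hl2 a). simpl; lra.
  - rewrite fsum_app, Hr1, Hr2. ring.
Qed.

Lemma Phi_hom l (x : linf A) : 0 < l -> Phi (lscale l x) = l * Phi x.
Proof.
  intros Hl. apply Rle_antisym.
  - assert (/ l * Phi (lscale l x) <= Phi x).
    { eapply sup_scale; [apply (Rinv_0_lt_compat _ Hl) | apply Phi_ne | apply Phi_bnd | ].
      intros s [c [xs [Hc [Hl1 Hr]]]]. exists (/ l * s). split; [|lra].
      exists (/ l * c), (map (lscale (/ l)) xs). split.
      { apply Rmult_le_pos; [left; apply Rinv_0_lt_compat|]; auto. }
      split.
      - intro a. rewrite lsum_scale by (left; apply Rinv_0_lt_compat; auto).
        specialize (Hl1 a). simpl in Hl1.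
        apply Rmult_le_reg_l with l; auto. field_simplify; try lra.
      - rewrite fsum_scale by (apply Rinv_0_lt_compat; auto). rewrite Hr. ring. }
    apply Rmult_le_compat_l with (r := l) in H; [|lra]. field_simplify in H; lra.
  - eapply sup_scale; [apply Hl | apply Phi_ne | apply Phi_bnd | ].
    intros s [c [xs [Hc [Hl1 Hr]]]]. exists (l * s). split; [|lra].
    exists (l * c), (map (lscale l) xs). split; [nra|]. split.
    + intro a. rewrite lsum_scale by lra. specialize (Hl1 a). simpl. nra.
    + rewrite fsum_scale by lra. rewrite Hr. ring.
Qed.

Lemma Phi_zero (z : linf A) : (forall a, z a = 0) -> Phi z = 0.
Proof.
  intros H. assert (Phi z = Phi (lscale 2 z)) by (apply Phi_ext; intro a; simpl; rewrite H; ring).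
  rewrite Phi_hom in H0 by lra. lra.
Qed.


Lemma key (Theta : linf A -> R) :
  (forall g, H0_pos g -> (forall x, f x <= g x) -> FBL_norm g = FBL_norm f -> g = f) ->
  FBL_norm f = Finite N ->
  (forall x, Phi x <= Theta x) ->
  (forall u w, Theta u + Theta w <= Theta (ladd u w)) ->
  (forall l x, 0 < l -> Theta (lscale l x) = l * Theta x) ->
  (forall u w : linf A, (forall a, u a <= w a) -> Theta u <= Theta w) ->
  Theta (lconst 1) <= N ->
  f = (fun x => Theta (labs x)).
Proof.
  intros Hmax Hf T1 T2 T3 T4 T5.
  set (g := fun x => Theta (labs x)).
  assert (Text : forall u w : linf A, (forall a, u a = w a) -> Theta u = Theta w).
  { intros u w H; apply Rle_antisym; apply T4; intro a; rewrite H; lra. }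
  assert (gnn : forall x, 0 <= g x).
  { intro x. unfold g. eapply Rle_trans; [|apply T1]. apply Phi_nn. intro a; simpl; apply Rabs_pos. }
  assert (fg : forall x, f x <= g x).
  { intro x. eapply Rle_trans; [apply Phi_f|apply T1]. }
  assert (gsum : forall xs, fsum g xs <= Theta (lsum_l xs)).
  { induction xs; unfold fsum in *; simpl.
    - eapply Rle_trans; [|apply T1]. apply Phi_nn. intro; simpl; lra.
    - eapply Rle_trans; [|apply T2]. unfold g at 1. lra. }
  assert (Hnorm : FBL_norm g = Finite N).
  { unfold FBL_norm; apply is_lub_Rbar_unique. split.
    - intros r [xs [Had Hr]]. subst r. simpl. rewrite fold_abs_gen by auto.
      eapply Rle_trans; [apply gsum|]. eapply Rle_trans; [|apply T5]. apply T4.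
      intro a. rewrite lsum_l_eq. apply Had.
    - intros b Hb. pose proof (Lub_Rbar_correct (FBL_sums f)) as [_ Hl].
      unfold FBL_norm in Hf. rewrite Hf in Hl. apply Hl.
      intros r [xs [Had Hr]]. subst r.
      apply Rbar_le_trans with (Finite (fold_right (fun (x : linf A) s => Rabs (g x) + s) 0 xs)).
      + simpl. rewrite fold_abs_gen, fold_abs_gen by auto. apply fsum_mono; auto.
      + apply Hb. exists xs; split; auto. }
  symmetry. apply Hmax; auto.
  - split; [split|]; auto.
    + intros l x Hl. unfold g. rewrite <- T3 by auto. apply Text. intro a; simpl.
      rewrite Rabs_mult, (Rabs_pos_eq l); lra.
    + rewrite Hnorm. discriminate.
  - rewrite Hnorm; auto.
Qed.

Lemma Phi_one_ge : FBL_norm f = Finite N -> N <= Phi (lconst 1).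
Proof.
  intros Hf. pose proof (Lub_Rbar_correct (FBL_sums f)) as [_ Hl].
  unfold FBL_norm in Hf. rewrite Hf in Hl. apply (Hl (Finite (Phi (lconst 1)))).
  intros r [xs [Had Hr]]. subst r. simpl. apply Phi_ub. exists 0, xs. split; [lra|]. split.
  - intro a. simpl. specialize (Had a). unfold lsum. lra.
  - rewrite fold_abs. ring.
Qed.

Definition vy (y : linf A) := - Phi (lscale (-1) y).
Definition PsiSet (y : linf A) (x : linf A) (r : R) :=
  exists t, r = Phi (ladd x (lscale (-t) y)) + t * vy y.
Definition Psi y x := sup (PsiSet y x).

Lemma L0 y : Phi y + Phi (lscale (-1) y) < 0 ->
  forall t, Phi (lscale (-t) y) + t * vy y <= 0.
Proof.
  intros Hy t. unfold vy. destruct (Rtotal_order t 0) as [lt|[eq|gt]].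
  - rewrite Phi_hom by lra. nra.
  - subst t. rewrite Phi_zero by (intro; simpl; ring). lra.
  - assert (Phi (lscale (-t) y) = Phi (lscale t (lscale (-1) y))) by (apply Phi_ext; intro; simpl; ring).
    rewrite H, Phi_hom by lra. lra.
Qed.

Section PsiSec.
Variable y : linf A.
Hypothesis Hy : Phi y + Phi (lscale (-1) y) < 0.

Lemma Psi_bnd x : bnd (PsiSet y x).
Proof.
  destruct (lv_bdd x) as [B HB]. exists (Rabs B * N).
  intros r [t Hr]. subst r.
  assert (Phi (ladd x (lscale (-t) y)) <= Phi (ladd (lscale (-t) y) (lconst (Rabs B)))).
  { apply Phi_mono. intro a. simpl. specialize (HB a). pose proof (Rle_abs (x a)).
    pose proof (Rle_abs B). lra. }
  pose proof (Phi_shift (lscale (-t) y) (Rabs_pos B)). pose proof (L0 y Hy t). lra.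
Qed.
Lemma Psi_ne x : PsiSet y x (Phi (ladd x (lscale (-0) y)) + 0 * vy y).
Proof. exists 0; auto. Qed.
Lemma Psi_ub x r : PsiSet y x r -> r <= Psi y x.
Proof. intros; apply sup_ub; auto using Psi_bnd. Qed.
Lemma Psi_le x M : (forall r, PsiSet y x r -> r <= M) -> Psi y x <= M.
Proof. intros; eapply sup_le; [apply Psi_ne|auto]. Qed.

Lemma Psi_ge x : Phi x <= Psi y x.
Proof.
  eapply Rle_trans; [|apply Psi_ub; apply Psi_ne].
  rewrite (Phi_ext (ladd x (lscale (-0) y)) x) by (intro; simpl; ring). lra.
Qed.
Lemma Psi_y : vy y <= Psi y y.
Proof.
  eapply Rle_trans; [|apply Psi_ub; exists 1; reflexivity].
  rewrite Phi_zero by (intro; simpl; ring). lra.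
Qed.
Lemma Psi_mono (u w : linf A) : (forall a, u a <= w a) -> Psi y u <= Psi y w.
Proof.
  intros H. apply Psi_le. intros r [t Hr]. subst r.
  eapply Rle_trans; [|apply Psi_ub; exists t; reflexivity].
  assert (Phi (ladd u (lscale (-t) y)) <= Phi (ladd w (lscale (-t) y))).
  { apply Phi_mono. intro a; simpl. specialize (H a); lra. }
  lra.
Qed.
Lemma Psi_sadd u w : Psi y u + Psi y w <= Psi y (ladd u w).
Proof.
  eapply sup_add; [apply Psi_ne | apply Psi_ne | apply Psi_bnd | ].
  intros s1 s2 [t1 H1] [t2 H2]. subst s1 s2.
  exists (Phi (ladd (ladd u w) (lscale (-(t1+t2)) y)) + (t1 + t2) * vy y).
  split; [exists (t1 + t2); reflexivity|].
  pose proof (Phi_sadd (ladd u (lscale (- t1) y)) (ladd w (lscale (- t2) y))).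
  rewrite (Phi_ext (ladd (ladd u (lscale (- t1) y)) (ladd w (lscale (- t2) y)))
     (ladd (ladd u w) (lscale (-(t1+t2)) y))) in H by (intro; simpl; ring).
  lra.
Qed.
Lemma Psi_hom l (x : linf A) : 0 < l -> Psi y (lscale l x) = l * Psi y x.
Proof.
  intros Hl. apply Rle_antisym.
  - assert (/ l * Psi y (lscale l x) <= Psi y x).
    { eapply sup_scale; [apply (Rinv_0_lt_compat _ Hl) | apply Psi_ne | apply Psi_bnd | ].
      intros s [t Ht]. subst s.
      exists (Phi (ladd x (lscale (-(t / l)) y)) + (t / l) * vy y). split; [exists (t/l); reflexivity|].
      rewrite (Phi_ext (ladd (lscale l x) (lscale (- t) y)) (lscale l (ladd x (lscale (-(t / l)) y))))
        by (intro; simpl; field; lra).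
      rewrite Phi_hom by auto. right; field; lra. }
    apply Rmult_le_compat_l with (r := l) in H; [|lra]. field_simplify in H; lra.
  - eapply sup_scale; [apply Hl | apply Psi_ne | apply Psi_bnd | ].
    intros s [t Ht]. subst s.
    exists (Phi (ladd (lscale l x) (lscale (-(l * t)) y)) + (l * t) * vy y). split; [exists (l*t); reflexivity|].
    rewrite (Phi_ext (ladd (lscale l x) (lscale (-(l * t)) y)) (lscale l (ladd x (lscale (- t) y))))
      by (intro; simpl; ring).
    rewrite Phi_hom by auto. right; ring.
Qed.
Lemma Psi_one : Psi y (lconst 1) <= N.
Proof.
  apply Psi_le. intros r [t Hr]. subst r.
  rewrite (Phi_ext (ladd (lconst 1) (lscale (- t) y)) (ladd (lscale (-t) y) (lconst 1))) by (intro; simpl; ring).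
  pose proof (Phi_shift (lscale (-t) y) (Rle_0_1)). pose proof (L0 y Hy t). lra.
Qed.
End PsiSec.

Lemma Phi_lin y :
  (forall g, H0_pos g -> (forall x, f x <= g x) -> FBL_norm g = FBL_norm f -> g = f) ->
  FBL_norm f = Finite N ->
  Phi y + Phi (lscale (-1) y) = 0.
Proof.
  intros Hmax Hf. apply Rle_antisym.
  - eapply Rle_trans; [apply Phi_sadd|]. rewrite Phi_zero by (intro; simpl; ring). lra.
  - apply Rnot_lt_le; intro Hy.
    pose proof (key (Psi y) Hmax Hf (Psi_ge y Hy) (Psi_sadd y Hy) (Psi_hom y Hy) (Psi_mono y Hy) (Psi_one y Hy)) as Heq.
    destruct (lv_bdd y) as [B HB]. set (B' := Rabs B + 1).
    assert (HB' : 0 < B') by (unfold B'; pose proof (Rabs_pos B); lra).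
    set (z := ladd y (lconst B')).
    assert (znn : forall a, 0 <= z a).
    { intro a. simpl. specialize (HB a). pose proof (Rle_abs (- y a)). rewrite Rabs_Ropp in H.
      pose proof (Rle_abs B). unfold B'. lra. }
    assert (E1 : f z = Psi y z).
    { pose proof (f_equal (fun h => h z) Heq) as E0. cbv beta in E0. rewrite E0.
      apply Rle_antisym; apply Psi_mono; auto; intro a; simpl;
      rewrite Rabs_pos_eq by (apply znn); lra. }
    assert (E2 : f z <= Phi z).
    { eapply Rle_trans; [apply Phi_f|]. right; apply Phi_ext. intro a; simpl.
      rewrite Rabs_pos_eq by (apply znn); lra. }
    pose proof (Psi_sadd y Hy y (lconst B')) as E3.
    pose proof (Psi_ge y Hy (lconst B')) as E4.
    assert (E5 : Phi (lconst B') = B' * Phi (lconst 1)).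
    { rewrite <- Phi_hom by auto. apply Phi_ext; intro; simpl; ring. }
    pose proof (Phi_one_ge Hf) as E6.
    pose proof (Psi_y y Hy) as E7.
    pose proof (Phi_shift y (Rlt_le _ _ HB')) as E8.
    unfold vy in E7.
    assert (B' * N <= B' * Phi (lconst 1)) by (apply Rmult_le_compat_l; lra).
    fold z in E8, E3. lra.
Qed.

Lemma main_sec (hA : inhabited A) :
  (forall g, H0_pos g -> (forall x, f x <= g x) -> FBL_norm g = FBL_norm f -> g = f) ->
  FBL_norm f = Finite N ->
  exists phi : linf A -> R, linf_dual phi /\ f = g_of phi.
Proof.
  intros Hmax Hf. exists Phi.
  assert (Hneg : forall x, Phi (lscale (-1) x) = - Phi x).
  { intro x. pose proof (Phi_lin x Hmax Hf). lra. }
  split; [split; [|split]|].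
  - intros x z. apply Rle_antisym; [|apply Phi_sadd].
    pose proof (Phi_sadd (lscale (-1) x) (lscale (-1) z)).
    rewrite (Phi_ext (ladd (lscale (-1) x) (lscale (-1) z)) (lscale (-1) (ladd x z))) in H
      by (intro; simpl; ring).
    rewrite !Hneg in H. lra.
  - intros l x. destruct (Rtotal_order l 0) as [lt|[eq|gt]].
    + rewrite (Phi_ext (lscale l x) (lscale (-l) (lscale (-1) x))) by (intro; simpl; ring).
      rewrite Phi_hom, Hneg by lra. ring.
    + subst l. rewrite Phi_zero by (intro; simpl; ring). ring.
    + apply Phi_hom; auto.
  - exists N. intros x M HM. destruct hA as [a0].
    assert (HM0 : 0 <= M) by (pose proof (Rabs_pos (x a0)); specialize (HM a0); lra).
    assert (Hc : Phi (ladd (lconst 0) (lconst M)) <= M * N).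
    { pose proof (Phi_shift (lconst 0) HM0). rewrite (Phi_zero (lconst 0)) in H by (intro; reflexivity). lra. }
    assert (Phi x <= M * N).
    { eapply Rle_trans; [|apply Hc]. apply Phi_mono. intro a; simpl.
      specialize (HM a). pose proof (Rle_abs (x a)). lra. }
    assert (Phi (lscale (-1) x) <= M * N).
    { eapply Rle_trans; [|apply Hc]. apply Phi_mono. intro a; simpl.
      specialize (HM a). pose proof (Rle_abs (- x a)). rewrite Rabs_Ropp in H0. lra. }
    rewrite Hneg in H0. apply Rabs_le. lra.
  - pose proof (key Phi Hmax Hf (fun x => Rle_refl _) Phi_sadd Phi_hom Phi_mono) as Heq.
    transitivity (fun x => Phi (labs x)).
    + apply Heq. rewrite (Phi_ext (lconst 1) (ladd (lconst 0) (lconst 1))) by (intro; simpl; ring).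
      pose proof (Phi_shift (lconst 0) Rle_0_1). rewrite (Phi_zero (lconst 0)) in H by (intro; reflexivity). lra.
    + apply functional_extensionality. intro x. unfold g_of. rewrite Rabs_pos_eq; auto.
      apply Phi_nn. intro; simpl; apply Rabs_pos.
Qed.

End Main.

Theorem lemma4p7 (A : Type) (hA : inhabited A) (f : linf A -> R) :
  maximal f ->
  exists phi : linf A -> R, linf_dual phi /\ f = g_of phi.
Proof.
  unfold maximal, H0_pos, H0. intros [[[Hhom Hnorm] Hpos] Hmax].
  pose proof (Lub_Rbar_correct (FBL_sums f)) as [Hub Hl].
  assert (Hz : FBL_sums f 0) by (exists nil; split; [intro; simpl; lra | reflexivity]).
  unfold FBL_norm in Hnorm. destruct (Lub_Rbar (FBL_sums f)) as [N| |] eqn:E.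
  - pose proof (main_sec (f:=f) (N:=N)) as HMs. apply HMs; auto.
  - contradiction.
  - specialize (Hub 0 Hz). simpl in Hub. contradiction.
Qed.
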